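(* For each $L\in\{N, NeF, CoPC, MPC\}$, for every finite multiset of formulas $\Gamma$ and every formula $\varphi$: the sequent $\Gamma\Rightarrow\varphi$ is derivable in $\mathbf{G3}L$ if and only if the history sequent $\emptyset\mid\Gamma\Rightarrow\varphi$ is derivable in $\mathbf{G3}L^{Hist}$.
   Context: Formulas are generated from a countable set of propositional variables $p,q,\dots$ and the constant $\top$ by the grammar $\varphi::= p\mid\top\mid\varphi\wedge\varphi\mid\varphi\vee\varphi\mid\varphi\to\varphi\mid\neg\varphi$ (there is no constant $\bot$). Ordinary systems. A sequent is $\Gamma\Rightarrow\varphi$ with $\Gamma$ a finite multiset of formulas and $\varphi$ a formula; $\Gamma,\alpha$ denotes $\Gamma$ with one more occurrence of $\alpha$. Rules: (ax) $\Gamma,p\Rightarrow p$; ($\top$) $\Gamma\Rightarrow\top$; ($\to$r) from $\Gamma,\alpha\Rightarrow\beta$ infer $\Gamma\Rightarrow\alpha\to\beta$; ($\to$l) from $\Gamma,\alpha\to\beta\Rightarrow\alpha$ and $\Gamma,\beta\Rightarrow\varphi$ infer $\Gamma,\alpha\to\beta\Rightarrow\varphi$; ($\wedge$r) from $\Gamma\Rightarrow\alpha$ and $\Gamma\Rightarrow\beta$ infer $\Gamma\Rightarrow\alpha\wedge\beta$; ($\wedge$l) from $\Gamma,\alpha,\beta\Rightarrow\varphi$ infer $\Gamma,\alpha\wedge\beta\Rightarrow\varphi$; ($\vee$r$_1$), ($\vee$r$_2$) from $\Gamma\Rightarrow\alpha$ (resp. $\Gamma\Rightarrow\beta$) infer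 $\Gamma\Rightarrow\alpha\vee\beta$; ($\vee$l) from $\Gamma,\alpha\Rightarrow\varphi$ and $\Gamma,\beta\Rightarrow\varphi$ infer $\Gamma,\alpha\vee\beta\Rightarrow\varphi$; (n) from $\Gamma,\neg\alpha,\beta\Rightarrow\alpha$ and $\Gamma,\neg\alpha,\alpha\Rightarrow\beta$ infer $\Gamma,\neg\alpha\Rightarrow\neg\beta$; (nef) from $\Gamma,\neg\alpha\Rightarrow\alpha$ infer $\Gamma,\neg\alpha\Rightarrow\neg\beta$; (copc) from $\Gamma,\neg\alpha,\beta\Rightarrow\alpha$ infer $\Gamma,\neg\alpha\Rightarrow\neg\beta$; (an) from $\Gamma,\alpha\Rightarrow\neg\alpha$ infer $\Gamma\Rightarrow\neg\alpha$. Positive rules: (ax) through ($\vee$l). $\mathbf{G3N}$ = positive + (n); $\mathbf{G3NeF}$ = positive + (n) + (nef); $\mathbf{G3CoPC}$ = positive + (copc); $\mathbf{G3MPC}$ = positive + (copc) + (an); no weakening, contraction or cut rules. History systems. A history sequent is $\mathcal H\mid\Gamma\Rightarrow\varphi$ where $\mathcal H$ (the history) is a finite set of formulas, $\Gamma$ a finite multiset, $\varphi$ a formula (the goal). $(\psi,\mathcal H)$ denotes $\mathcal H\cup\{\psi\}$, $\emptyset$ is the empty history, ''$\alpha\in\Gamma$'' means $\alpha$ occurs in $\Gamma$. History rules (side conditions after ''if''): (ax) $\mathcal H\mid\Gamma,p\Rightarrow p$; ($\top$) $\mathcal H\mid\Gamma\Rightarrow\top$; ($\to$r$_1$) from $\emptyset\mid\Gamma,\alpha\Rightarrow\beta$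 infer $\mathcal H\mid\Gamma\Rightarrow\alpha\to\beta$, if $\alpha\notin\Gamma$; ($\to$r$_2$) from $\mathcal H\mid\Gamma\Rightarrow\beta$ infer $\mathcal H\mid\Gamma\Rightarrow\alpha\to\beta$, if $\alpha\in\Gamma$; ($\to$l) from $(\varphi,\mathcal H)\mid\Gamma,\alpha\to\beta\Rightarrow\alpha$ and $\emptyset\mid\Gamma,\alpha\to\beta,\beta\Rightarrow\varphi$ infer $\mathcal H\mid\Gamma,\alpha\to\beta\Rightarrow\varphi$, if $\varphi\notin\mathcal H$ and $\beta\notin\Gamma$; ($\wedge$r) from $\mathcal H\mid\Gamma\Rightarrow\alpha$ and $\mathcal H\mid\Gamma\Rightarrow\beta$ infer $\mathcal H\mid\Gamma\Rightarrow\alpha\wedge\beta$; ($\wedge$l$_1$) from $\emptyset\mid\Gamma,\alpha\wedge\beta,\alpha\Rightarrow\varphi$ infer $\mathcal H\mid\Gamma,\alpha\wedge\beta\Rightarrow\varphi$, if $\alpha\notin\Gamma$; ($\wedge$l$_2$) from $\emptyset\mid\Gamma,\alpha\wedge\beta,\beta\Rightarrow\varphi$ infer $\mathcal H\mid\Gamma,\alpha\wedge\beta\Rightarrow\varphi$, if $\beta\notin\Gamma$; ($\vee$r$_1$), ($\vee$r$_2$) from $\mathcal H\mid\Gamma\Rightarrow\alpha$ (resp. $\mathcal H\mid\Gamma\Rightarrow\beta$) infer $\mathcal H\mid\Gamma\Rightarrow\alpha\vee\beta$; ($\vee$l) from $\emptyset\mid\Gamma,\alpha\vee\beta,\alpha\Rightarrow\varphi$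 and $\emptyset\mid\Gamma,\alpha\vee\beta,\beta\Rightarrow\varphi$ infer $\mathcal H\mid\Gamma,\alpha\vee\beta\Rightarrow\varphi$, if $\alpha,\beta\notin\Gamma$; (n$_1$) from $\emptyset\mid\Gamma,\neg\alpha,\beta\Rightarrow\alpha$ and $\emptyset\mid\Gamma,\neg\alpha,\alpha\Rightarrow\beta$ infer $\mathcal H\mid\Gamma,\neg\alpha\Rightarrow\neg\beta$, if $\beta\notin\Gamma\cup\{\neg\alpha\}$ and $\alpha\notin\Gamma$; (n$_2$) from $\emptyset\mid\Gamma,\neg\alpha,\beta\Rightarrow\alpha$ and $\mathcal H\mid\Gamma,\neg\alpha\Rightarrow\beta$ infer $\mathcal H\mid\Gamma,\neg\alpha\Rightarrow\neg\beta$, if $\beta\notin\Gamma\cup\{\neg\alpha\}$ and $\alpha\in\Gamma$; (n$_3$) from $(\neg\beta,\mathcal H)\mid\Gamma,\neg\alpha\Rightarrow\alpha$ and $\emptyset\mid\Gamma,\neg\alpha,\alpha\Rightarrow\beta$ infer $\mathcal H\mid\Gamma,\neg\alpha\Rightarrow\neg\beta$, if $\neg\beta\notin\mathcal H$, $\beta\in\Gamma\cup\{\neg\alpha\}$ and $\alpha\notin\Gamma$; (n$_4$) from $(\neg\beta,\mathcal H)\mid\Gamma,\neg\alpha\Rightarrow\alpha$ and $\mathcal H\mid\Gamma,\neg\alpha\Rightarrow\beta$ infer $\mathcal H\mid\Gamma,\neg\alpha\Rightarrow\neg\beta$, if $\neg\beta\notin\mathcal H$, $\beta\in\Gamma\cup\{\neg\alpha\}$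 and $\alpha\in\Gamma$; (nef) from $(\neg\beta,\mathcal H)\mid\Gamma,\neg\alpha\Rightarrow\alpha$ infer $\mathcal H\mid\Gamma,\neg\alpha\Rightarrow\neg\beta$, if $\neg\beta\notin\mathcal H$; (copc$_1$) from $\emptyset\mid\Gamma,\neg\alpha,\beta\Rightarrow\alpha$ infer $\mathcal H\mid\Gamma,\neg\alpha\Rightarrow\neg\beta$, if $\beta\notin\Gamma\cup\{\neg\alpha\}$; (copc$_2$) from $(\neg\beta,\mathcal H)\mid\Gamma,\neg\alpha\Rightarrow\alpha$ infer $\mathcal H\mid\Gamma,\neg\alpha\Rightarrow\neg\beta$, if $\neg\beta\notin\mathcal H$ and $\beta\in\Gamma\cup\{\neg\alpha\}$; (an) from $\emptyset\mid\Gamma,\alpha\Rightarrow\neg\alpha$ infer $\mathcal H\mid\Gamma\Rightarrow\neg\alpha$, if $\alpha\notin\Gamma$. In addition, ($\to$l), ($\wedge$l$_1$), ($\wedge$l$_2$), ($\vee$l) may only be applied when the goal $\varphi$ of the conclusion is a propositional variable, a negation or a disjunction. $\mathbf{G3N}^{Hist}$ = positive history rules (ax)–($\vee$l) + (n$_1$)–(n$_4$); $\mathbf{G3NeF}^{Hist}$ = positive history rules + (n$_1$)–(n$_4$) + (nef); $\mathbf{G3CoPC}^{Hist}$ = positive history rules + (copc$_1$), (copc$_2$); $\mathbf{G3MPC}^{Hist}$ = positive history rules + (copc$_1$), (copc$_2$), (an). In both kinds of systems, a derivation is a finite tree of rule instances whose leaves are instances of (ax) or ($\top$). *)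

(* Defs.v *)
From Stdlib Require Import List Permutation.
Import ListNotations.

Inductive form : Type :=
| Var : nat -> form
| Top : form
| And : form -> form -> form
| Or  : form -> form -> form
| Imp : form -> form -> form
| Neg : form -> form.

Inductive logic : Type := LN | LNeF | LCoPC | LMPC.

Definition has_n (L : logic) : bool :=
  match L with LN | LNeF => true | _ => false end.
Definition has_nef (L : logic) : bool :=
  match L with LNeF => true | _ => false end.
Definition has_copc (L : logic) : bool :=
  match L with LCoPC | LMPC => true | _ => false end.
Definition has_an (L : logic) : bool :=
  match L with LMPC => true | _ => false end.

(* Multisets are lists; "Gamma, a" in a conclusion is any list that is a
   permutation of a :: Gamma. *)

Inductive G3 (L : logic) : list form -> form -> Prop :=
| g_ax : forall D G p, Permutation D (Var p :: G) -> G3 L D (Var p)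
| g_top : forall D, G3 L D Top
| g_impR : forall G a b, G3 L (a :: G) b -> G3 L G (Imp a b)
| g_impL : forall D G a b phi, Permutation D (Imp a b :: G) ->
    G3 L D a -> G3 L (b :: G) phi -> G3 L D phi
| g_andR : forall G a b, G3 L G a -> G3 L G b -> G3 L G (And a b)
| g_andL : forall D G a b phi, Permutation D (And a b :: G) ->
    G3 L (a :: b :: G) phi -> G3 L D phi
| g_orR1 : forall G a b, G3 L G a -> G3 L G (Or a b)
| g_orR2 : forall G a b, G3 L G b -> G3 L G (Or a b)
| g_orL : forall D G a b phi, Permutation D (Or a b :: G) ->
    G3 L (a :: G) phi -> G3 L (b :: G) phi -> G3 L D phi
| g_n : forall D G a b, has_n L = true -> Permutation D (Neg a :: G) ->
    G3 L (b :: D) a -> G3 L (a :: D) b -> G3 L D (Neg b)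
| g_nef : forall D G a b, has_nef L = true -> Permutation D (Neg a :: G) ->
    G3 L D a -> G3 L D (Neg b)
| g_copc : forall D G a b, has_copc L = true -> Permutation D (Neg a :: G) ->
    G3 L (b :: D) a -> G3 L D (Neg b)
| g_an : forall G a, has_an L = true -> G3 L (a :: G) (Neg a) -> G3 L G (Neg a).

Definition goal_ok (phi : form) : Prop :=
  match phi with Var _ | Neg _ | Or _ _ => True | _ => False end.

(* History systems G3L^Hist.  The history (a finite set) is represented by a
   list, read up to membership: (psi, H) is psi :: H, the empty history is []. *)
Inductive G3H (L : logic) : list form -> list form -> form -> Prop :=
| h_ax : forall H D G p, Permutation D (Var p :: G) -> G3H L H D (Var p)
| h_top : forall H D, G3H L H D Top
| h_impR1 : forall H G a b, ~ In a G -> G3H L [] (a :: G) b -> G3H L H G (Imp a b)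
| h_impR2 : forall H G a b, In a G -> G3H L H G b -> G3H L H G (Imp a b)
| h_impL : forall H D G a b phi, Permutation D (Imp a b :: G) -> goal_ok phi ->
    ~ In phi H -> ~ In b G ->
    G3H L (phi :: H) D a -> G3H L [] (b :: D) phi -> G3H L H D phi
| h_andR : forall H G a b, G3H L H G a -> G3H L H G b -> G3H L H G (And a b)
| h_andL1 : forall H D G a b phi, Permutation D (And a b :: G) -> goal_ok phi ->
    ~ In a G -> G3H L [] (a :: D) phi -> G3H L H D phi
| h_andL2 : forall H D G a b phi, Permutation D (And a b :: G) -> goal_ok phi ->
    ~ In b G -> G3H L [] (b :: D) phi -> G3H L H D phi
| h_orR1 : forall H G a b, G3H L H G a -> G3H L H G (Or a b)
| h_orR2 : forall H G a b, G3H L H G b -> G3H L H G (Or a b)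
| h_orL : forall H D G a b phi, Permutation D (Or a b :: G) -> goal_ok phi ->
    ~ In a G -> ~ In b G ->
    G3H L [] (a :: D) phi -> G3H L [] (b :: D) phi -> G3H L H D phi
| h_n1 : forall H D G a b, has_n L = true -> Permutation D (Neg a :: G) ->
    ~ In b (Neg a :: G) -> ~ In a G ->
    G3H L [] (b :: D) a -> G3H L [] (a :: D) b -> G3H L H D (Neg b)
| h_n2 : forall H D G a b, has_n L = true -> Permutation D (Neg a :: G) ->
    ~ In b (Neg a :: G) -> In a G ->
    G3H L [] (b :: D) a -> G3H L H D b -> G3H L H D (Neg b)
| h_n3 : forall H D G a b, has_n L = true -> Permutation D (Neg a :: G) ->
    ~ In (Neg b) H -> In b (Neg a :: G) -> ~ In a G ->
    G3H L (Neg b :: H) D a -> G3H L [] (a :: D) b -> G3H L H D (Neg b)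
| h_n4 : forall H D G a b, has_n L = true -> Permutation D (Neg a :: G) ->
    ~ In (Neg b) H -> In b (Neg a :: G) -> In a G ->
    G3H L (Neg b :: H) D a -> G3H L H D b -> G3H L H D (Neg b)
| h_nef : forall H D G a b, has_nef L = true -> Permutation D (Neg a :: G) ->
    ~ In (Neg b) H -> G3H L (Neg b :: H) D a -> G3H L H D (Neg b)
| h_copc1 : forall H D G a b, has_copc L = true -> Permutation D (Neg a :: G) ->
    ~ In b (Neg a :: G) -> G3H L [] (b :: D) a -> G3H L H D (Neg b)
| h_copc2 : forall H D G a b, has_copc L = true -> Permutation D (Neg a :: G) ->
    ~ In (Neg b) H -> In b (Neg a :: G) ->
    G3H L (Neg b :: H) D a -> G3H L H D (Neg b)
| h_an : forall H G a, has_an L = true -> ~ In a G ->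
    G3H L [] (a :: G) (Neg a) -> G3H L H G (Neg a).

(* Main.v *)
Require Import Defs.
From Stdlib Require Import List Permutation Arith Lia Classical Wf_nat.
Import ListNotations.

Fixpoint fsize (x : form) : nat := match x with
 | Var _ | Top => 1 | And a b | Or a b | Imp a b => S (fsize a + fsize b) | Neg a => S (fsize a) end.

Lemma neq_andl a b : a <> And a b. Proof. intro H; apply (f_equal fsize) in H; simpl in H; lia. Qed.
Lemma neq_andr a b : b <> And a b. Proof. intro H; apply (f_equal fsize) in H; simpl in H; lia. Qed.
Lemma neq_orl a b : a <> Or a b. Proof. intro H; apply (f_equal fsize) in H; simpl in H; lia. Qed.
Lemma neq_orr a b : b <> Or a b. Proof. intro H; apply (f_equal fsize) in H; simpl in H; lia. Qed.
Lemma neq_imp a b : b <> Imp a b. Proof. intro H; apply (f_equal fsize) in H; simpl in H; lia. Qed.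
Lemma neq_neg a : a <> Neg a. Proof. intro H; apply (f_equal fsize) in H; simpl in H; lia. Qed.

Lemma perm_split (x : form) D : In x D -> exists G, Permutation D (x :: G).
Proof. intro H. destruct (in_split _ _ H) as [l1 [l2 ->]]. exists (l1 ++ l2).
  apply Permutation_sym, Permutation_middle. Qed.

Lemma in_perm_hd (x : form) D G : Permutation D (x::G) -> In x D.
Proof. intro P. apply (Permutation_in _ (Permutation_sym P)). left; auto. Qed.
Lemma in_perm_tl (x y : form) D G : Permutation D (x::G) -> In y G -> In y D.
Proof. intros P H. apply (Permutation_in _ (Permutation_sym P)). right; auto. Qed.

Fixpoint covered (D0 : list form) (x : form) : Prop :=
  In x D0 \/ match x with
   | And a b => covered D0 a /\ covered D0 b
   | Or a b => covered D0 a \/ covered D0 b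
   | Imp a b => covered D0 b
   | _ => False end.

Lemma cov_in D x : In x D -> covered D x.
Proof. destruct x; simpl; auto. Qed.

Lemma cov_trans D0 D1 x : covered D0 x -> (forall y, In y D0 -> covered D1 y) -> covered D1 x.
Proof. intros H1 H2. induction x; simpl in H1; destruct H1 as [H1|H1];
  try (apply H2; assumption); try contradiction; simpl; right; tauto. Qed.

Lemma cov_cons D0 y x : covered D0 x -> covered (y::D0) x.
Proof. intro H. apply (cov_trans _ _ _ H). intros z Hz. apply cov_in. right; auto. Qed.

Lemma cov_ext D D0 a : (forall x, In x D -> covered D0 x) -> forall x, In x (a::D) -> covered (a::D0) x.
Proof. intros H x [<-|Hx]. apply cov_in; left; auto. apply cov_cons; auto. Qed.

Lemma cov_ext' D D0 a : (forall x, In x D -> covered D0 x) -> forall x, In x D -> covered (a::D0) x.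
Proof. intros H x Hx. apply cov_cons; auto. Qed.

Lemma hist_to_g3 L H D phi : G3H L H D phi ->
  forall D0, (forall x, In x D -> covered D0 x) -> G3 L D0 phi.
Proof.
  induction 1; intros D0 Hc.
  - destruct (Hc _ (in_perm_hd _ _ _ H0)) as [Hv|[]].
    destruct (perm_split _ _ Hv) as [G0 HG0]. eapply g_ax; eauto.
  - apply g_top.
  - apply g_impR. apply IHG3H. apply cov_ext; auto.
  - apply g_impR. apply IHG3H. apply cov_ext'; auto.
  - destruct (Hc _ (in_perm_hd _ _ _ H0)) as [Hi|Hb].
    + destruct (perm_split _ _ Hi) as [G0 HG0].
      eapply g_impL; [exact HG0 | apply IHG3H1; exact Hc | apply IHG3H2].
      intros x [<-|Hx]. apply cov_in; left; auto.
      apply cov_trans with D0; [apply Hc; auto|]. intros y Hy.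
      destruct (Permutation_in _ HG0 Hy) as [<-|Hy'].
      simpl; right; apply cov_in; left; auto.
      apply cov_in; right; auto.
    + apply IHG3H2. intros x [<-|Hx]; auto.
  - apply g_andR; auto.
  - destruct (Hc _ (in_perm_hd _ _ _ H0)) as [Hi|[Ha Hb]].
    + destruct (perm_split _ _ Hi) as [G0 HG0].
      eapply g_andL; [exact HG0|]. apply IHG3H.
      intros x [<-|Hx]. apply cov_in; left; auto.
      apply cov_trans with D0; [apply Hc; auto|]. intros y Hy.
      destruct (Permutation_in _ HG0 Hy) as [<-|Hy'].
      simpl; right; split; apply cov_in; [left|right;left]; auto.
      apply cov_in; right; right; auto.
    + apply IHG3H. intros x [<-|Hx]; auto.
  - destruct (Hc _ (in_perm_hd _ _ _ H0)) as [Hi|[Ha Hb]].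
    + destruct (perm_split _ _ Hi) as [G0 HG0].
      eapply g_andL; [exact HG0|]. apply IHG3H.
      intros x [<-|Hx]. apply cov_in; right; left; auto.
      apply cov_trans with D0; [apply Hc; auto|]. intros y Hy.
      destruct (Permutation_in _ HG0 Hy) as [<-|Hy'].
      simpl; right; split; apply cov_in; [left|right;left]; auto.
      apply cov_in; right; right; auto.
    + apply IHG3H. intros x [<-|Hx]; auto.
  - apply g_orR1; auto.
  - apply g_orR2; auto.
  - destruct (Hc _ (in_perm_hd _ _ _ H0)) as [Hi|[Ha|Hb]].
    + destruct (perm_split _ _ Hi) as [G0 HG0].
      eapply g_orL; [exact HG0|apply IHG3H1|apply IHG3H2];
      intros x [<-|Hx]; try solve [apply cov_in; left; auto];
      (apply cov_trans with D0; [apply Hc; auto|]; intros y Hy;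
      destruct (Permutation_in _ HG0 Hy) as [<-|Hy'];
      [simpl; right; solve [left; apply cov_in; left; auto | right; apply cov_in; left; auto]
      | apply cov_in; right; auto]).
    + apply IHG3H1. intros x [<-|Hx]; auto.
    + apply IHG3H2. intros x [<-|Hx]; auto.
  - destruct (Hc _ (in_perm_hd _ _ _ H1)) as [Hv|[]].
    destruct (perm_split _ _ Hv) as [G0 HG0].
    eapply g_n; eauto; [apply IHG3H1 | apply IHG3H2]; apply cov_ext; auto.
  - destruct (Hc _ (in_perm_hd _ _ _ H1)) as [Hv|[]].
    destruct (perm_split _ _ Hv) as [G0 HG0].
    eapply g_n; eauto; [apply IHG3H1; apply cov_ext | apply IHG3H2; apply cov_ext']; auto.
  - destruct (Hc _ (in_perm_hd _ _ _ H1)) as [Hv|[]].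
    destruct (perm_split _ _ Hv) as [G0 HG0].
    eapply g_n; eauto; [apply IHG3H1; apply cov_ext' | apply IHG3H2; apply cov_ext]; auto.
  - destruct (Hc _ (in_perm_hd _ _ _ H1)) as [Hv|[]].
    destruct (perm_split _ _ Hv) as [G0 HG0].
    eapply g_n; eauto; [apply IHG3H1; apply cov_ext' | apply IHG3H2; apply cov_ext']; auto.
  - destruct (Hc _ (in_perm_hd _ _ _ H1)) as [Hv|[]].
    destruct (perm_split _ _ Hv) as [G0 HG0].
    eapply g_nef; eauto.
  - destruct (Hc _ (in_perm_hd _ _ _ H1)) as [Hv|[]].
    destruct (perm_split _ _ Hv) as [G0 HG0].
    eapply g_copc; eauto. apply IHG3H; apply cov_ext; auto.
  - destruct (Hc _ (in_perm_hd _ _ _ H1)) as [Hv|[]].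
    destruct (perm_split _ _ Hv) as [G0 HG0].
    eapply g_copc; eauto. apply IHG3H; apply cov_ext'; auto.
  - apply g_an; auto. apply IHG3H; apply cov_ext; auto.
Qed.

Inductive Ch (L : logic) : nat -> list form -> form -> Prop :=
| c_ax n D p : In (Var p) D -> Ch L (S n) D (Var p)
| c_top n D : Ch L (S n) D Top
| c_impR n D a b : Ch L n (a::D) b -> Ch L (S n) D (Imp a b)
| c_impL n D a b phi : In (Imp a b) D -> goal_ok phi -> Ch L n D a -> Ch L n (b::D) phi -> Ch L (S n) D phi
| c_andR n D a b : Ch L n D a -> Ch L n D b -> Ch L (S n) D (And a b)
| c_andL1 n D a b phi : In (And a b) D -> goal_ok phi -> Ch L n (a::D) phi -> Ch L (S n) D phi
| c_andL2 n D a b phi : In (And a b) D -> goal_ok phi -> Ch L n (b::D) phi -> Ch L (S n) D phi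
| c_orR1 n D a b : Ch L n D a -> Ch L (S n) D (Or a b)
| c_orR2 n D a b : Ch L n D b -> Ch L (S n) D (Or a b)
| c_orL n D a b phi : In (Or a b) D -> goal_ok phi -> Ch L n (a::D) phi -> Ch L n (b::D) phi -> Ch L (S n) D phi
| c_n n D a b : has_n L = true -> In (Neg a) D -> Ch L n (b::D) a -> Ch L n (a::D) b -> Ch L (S n) D (Neg b)
| c_nef n D a b : has_nef L = true -> In (Neg a) D -> Ch L n D a -> Ch L (S n) D (Neg b)
| c_copc n D a b : has_copc L = true -> In (Neg a) D -> Ch L n (b::D) a -> Ch L (S n) D (Neg b)
| c_an n D a : has_an L = true -> Ch L n (a::D) (Neg a) -> Ch L (S n) D (Neg a).

Lemma incl_cons2 (a : form) D D' : incl D D' -> incl (a::D) (a::D').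
Proof. intros H x [<-|Hx]; [left|right]; auto. Qed.

Lemma Ch_weak L n D phi : Ch L n D phi -> forall D', incl D D' -> Ch L n D' phi.
Proof.
  induction 1; intros D' Hi;
  try (econstructor; solve [eauto using incl_cons2]).
  all: try (eapply c_impL; solve [eauto using incl_cons2]).
  all: try (eapply c_orL; solve [eauto using incl_cons2]).
  all: try (eapply c_n; solve [eauto using incl_cons2]).
Qed.

Lemma Ch_le L n D phi : Ch L n D phi -> forall m, n <= m -> Ch L m D phi.
Proof.
  induction 1; intros m Hm; destruct m as [|m]; try lia;
  try (econstructor; solve [eauto with arith]).
  all: try (eapply c_impL; solve [eauto with arith]).
  all: try (eapply c_orL; solve [eauto with arith]).
  all: try (eapply c_n; solve [eauto with arith]).
Qed.

Definition C L D phi := exists n, Ch L n D phi.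

Lemma C_weak L D D' phi : C L D phi -> incl D D' -> C L D' phi.
Proof. intros [n H] Hi. exists n. eapply Ch_weak; eauto. Qed.

Lemma C_swap L x y D phi : C L (x::y::D) phi -> C L (y::x::D) phi.
Proof. intro H. eapply C_weak; eauto. intros z Hz; simpl in *; tauto. Qed.

Fixpoint CR L D phi : Prop := match phi with
  | And x y => CR L D x /\ CR L D y
  | Imp x y => CR L (x::D) y
  | Top => True
  | _ => C L D phi end.

Lemma CR_mono L phi : forall D D', incl D D' -> CR L D phi -> CR L D' phi.
Proof. induction phi; intros D D' Hi H; simpl in *; try tauto;
  try (eapply C_weak; eauto).
  - split; [eapply IHphi1|eapply IHphi2]; eauto; tauto.
  - eapply IHphi2; [|eauto]. apply incl_cons2; auto.
Qed.

Lemma CR_C L phi : forall D, CR L D phi -> C L D phi.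
Proof. induction phi; intros D H; simpl in *; auto.
  - exists 1; constructor.
  - destruct (IHphi1 _ (proj1 H)) as [n1 H1]. destruct (IHphi2 _ (proj2 H)) as [n2 H2].
    exists (S (max n1 n2)). constructor; eapply Ch_le; eauto; lia.
  - destruct (IHphi2 _ H) as [n H1]. exists (S n). constructor; auto.
Qed.

Lemma CR_impL L a b phi : forall D, In (Imp a b) D -> C L D a -> CR L (b::D) phi -> CR L D phi.
Proof. induction phi; intros D Hi Ha H; simpl in *; auto.
  - destruct Ha as [n1 H1]; destruct H as [n2 H2]. exists (S (max n1 n2)).
    eapply c_impL; eauto; [simpl; auto| |]; eapply Ch_le; eauto; lia.
  - split; [apply IHphi1|apply IHphi2]; tauto.
  - destruct Ha as [n1 H1]; destruct H as [n2 H2]. exists (S (max n1 n2)).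
    eapply c_impL; eauto; [simpl; auto| |]; eapply Ch_le; eauto; lia.
  - apply IHphi2. right; auto. eapply C_weak; eauto. intros z Hz; right; auto.
    eapply CR_mono; [|eauto]. intros z Hz; simpl in *; tauto.
  - destruct Ha as [n1 H1]; destruct H as [n2 H2]. exists (S (max n1 n2)).
    eapply c_impL; eauto; [simpl; auto| |]; eapply Ch_le; eauto; lia.
Qed.

Lemma CR_andL1 L a b phi : forall D, In (And a b) D -> CR L (a::D) phi -> CR L D phi.
Proof. induction phi; intros D Hi H; simpl in *; auto.
  - destruct H as [n2 H2]. exists (S n2). eapply c_andL1; eauto. simpl; auto.
  - split; [apply IHphi1|apply IHphi2]; tauto.
  - destruct H as [n2 H2]. exists (S n2). eapply c_andL1; eauto. simpl; auto.
  - apply IHphi2. right; auto.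
    eapply CR_mono; [|eauto]. intros z Hz; simpl in *; tauto.
  - destruct H as [n2 H2]. exists (S n2). eapply c_andL1; eauto. simpl; auto.
Qed.

Lemma CR_andL2 L a b phi : forall D, In (And a b) D -> CR L (b::D) phi -> CR L D phi.
Proof. induction phi; intros D Hi H; simpl in *; auto.
  - destruct H as [n2 H2]. exists (S n2). eapply c_andL2; eauto. simpl; auto.
  - split; [apply IHphi1|apply IHphi2]; tauto.
  - destruct H as [n2 H2]. exists (S n2). eapply c_andL2; eauto. simpl; auto.
  - apply IHphi2. right; auto.
    eapply CR_mono; [|eauto]. intros z Hz; simpl in *; tauto.
  - destruct H as [n2 H2]. exists (S n2). eapply c_andL2; eauto. simpl; auto.
Qed.

Lemma CR_orL L a b phi : forall D, In (Or a b) D -> CR L (a::D) phi -> CR L (b::D) phi -> CR L D phi.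
Proof. induction phi; intros D Hi Ha H; simpl in *; auto.
  - destruct Ha as [n1 H1]; destruct H as [n2 H2]. exists (S (max n1 n2)).
    eapply c_orL; eauto; [simpl; auto| |]; eapply Ch_le; eauto; lia.
  - split; [apply IHphi1|apply IHphi2]; tauto.
  - destruct Ha as [n1 H1]; destruct H as [n2 H2]. exists (S (max n1 n2)).
    eapply c_orL; eauto; [simpl; auto| |]; eapply Ch_le; eauto; lia.
  - apply IHphi2. right; auto.
    eapply CR_mono; [|exact Ha]. intros z Hz; simpl in *; tauto.
    eapply CR_mono; [|exact H]. intros z Hz; simpl in *; tauto.
  - destruct Ha as [n1 H1]; destruct H as [n2 H2]. exists (S (max n1 n2)).
    eapply c_orL; eauto; [simpl; auto| |]; eapply Ch_le; eauto; lia.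
Qed.

Lemma perm_incl (D G : list form) x : Permutation D (x::G) -> incl G D.
Proof. intros P z Hz. eapply in_perm_tl; eauto. Qed.

Lemma g3_to_CR L D phi : G3 L D phi -> forall D', incl D D' -> CR L D' phi.
Proof.
  induction 1; intros D' Hi.
  - simpl. exists 1. constructor. apply Hi. eapply in_perm_hd; eauto.
  - simpl; auto.
  - simpl. apply IHG3. apply incl_cons2; auto.
  - eapply CR_impL. apply Hi; eapply in_perm_hd; eauto.
    apply CR_C; auto.
    apply IHG3_2. apply incl_cons2. eapply incl_tran; [eapply perm_incl; eauto|auto].
  - simpl; auto.
  - assert (HA : In (And a b) D') by (apply Hi; eapply in_perm_hd; eauto).
    eapply CR_andL1 with (a:=a)(b:=b); [exact HA|]. eapply CR_andL2 with (a:=a)(b:=b); [right; exact HA|].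
    apply IHG3. intros z Hz; simpl in Hz.
    destruct Hz as [<-|[<-|Hz]]; [right;left|left|right;right]; auto.
    apply Hi. eapply in_perm_tl; eauto.
  - destruct (CR_C _ _ _ (IHG3 D' Hi)) as [n Hn]. simpl. exists (S n). constructor; auto.
  - destruct (CR_C _ _ _ (IHG3 D' Hi)) as [n Hn]. simpl. exists (S n). apply c_orR2; auto.
  - eapply CR_orL. apply Hi; eapply in_perm_hd; eauto.
    apply IHG3_1. apply incl_cons2. eapply incl_tran; [eapply perm_incl; eauto|auto].
    apply IHG3_2. apply incl_cons2. eapply incl_tran; [eapply perm_incl; eauto|auto].
  - destruct (CR_C _ _ _ (IHG3_1 (b::D') (incl_cons2 _ _ _ Hi))) as [n1 K1].
    destruct (CR_C _ _ _ (IHG3_2 (a::D') (incl_cons2 _ _ _ Hi))) as [n2 K2].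
    simpl; exists (S (max n1 n2)). eapply c_n; eauto. apply Hi; eapply in_perm_hd; eauto.
    eapply Ch_le; eauto; lia. eapply Ch_le; eauto; lia.
  - destruct (CR_C _ _ _ (IHG3 D' Hi)) as [n1 K1].
    simpl; exists (S n1). eapply c_nef; eauto. apply Hi; eapply in_perm_hd; eauto.
  - destruct (CR_C _ _ _ (IHG3 (b::D') (incl_cons2 _ _ _ Hi))) as [n1 K1].
    simpl; exists (S n1). eapply c_copc; eauto. apply Hi; eapply in_perm_hd; eauto.
  - destruct (IHG3 (a::D') (incl_cons2 _ _ _ Hi)) as [n1 K1].
    simpl; exists (S n1). eapply c_an; eauto.
Qed.

Lemma minimize (P : nat -> Prop) k : P k -> exists m, m <= k /\ P m /\ forall m', m' < m -> ~ P m'.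
Proof.
  induction k as [k IH] using lt_wf_ind. intro Hk.
  destruct (classic (exists m', m' < k /\ P m')) as [[m' [Hl Hm]]|Hn].
  - destruct (IH m' Hl Hm) as [m [? [? ?]]]. exists m; repeat split; auto; lia.
  - exists k; repeat split; auto. intros m' Hl Hm; apply Hn; eauto.
Qed.

Lemma split_info (X : form) D : In X D -> exists G, Permutation D (X::G) /\
  (forall y, In y G -> In y D) /\ (forall y, In y D <-> In y (X::G)).
Proof. intro H. destruct (perm_split _ _ H) as [G HG]. exists G. split; [auto|split].
  intros y Hy; eapply in_perm_tl; eauto.
  intro y; split; intro Hy; [eapply Permutation_in; eauto| eapply Permutation_in; [apply Permutation_sym|]; eauto]. Qed.

Lemma ch_hist L n : forall D phi Hs, Ch L n D phi -> (forall m, m < n -> ~ Ch L m D phi) ->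
  (forall psi m, In psi Hs -> m <= n -> ~ Ch L m D psi) -> G3H L Hs D phi.
Proof.
  induction n as [n IH] using lt_wf_ind. intros D phi Hs Hd Hmin Hinv.
  destruct n as [|k]; [inversion Hd|].
  assert (step : forall D' g H', Ch L k D' g -> (forall psi m, In psi H' -> m <= k -> ~ Ch L m D' psi) -> G3H L H' D' g).
  { intros D' g H' Hk Hi. destruct (minimize (fun m => Ch L m D' g) k Hk) as [m [Hm [Hc Hmn]]].
    apply (IH m); [lia|exact Hc|exact Hmn|]. intros psi m' Hp Hl; apply Hi; auto; lia. }
  assert (reset : forall D' g, Ch L k D' g -> G3H L [] D' g).
  { intros; apply step; auto. }
  assert (same : forall g, Ch L k D g -> G3H L Hs D g).
  { intros; apply step; auto; intros psi m Hp Hl; apply Hinv; auto; lia. }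
  assert (push : forall g, Ch L k D g -> G3H L (phi::Hs) D g).
  { intros; apply step; auto; intros psi m [<-|Hp] Hl; [apply Hmin; lia | apply Hinv; auto; lia]. }
  assert (notin : ~ In phi Hs). { intro Hp. exact (Hinv phi (S k) Hp (le_n _) Hd). }
  assert (skip : forall x, Ch L k (x::D) phi -> In x D -> False).
  { intros x Hx Hin. apply (Hmin k); [lia|]. eapply Ch_weak; eauto. intros z [<-|Hz]; auto. }
  assert (drop : forall x g, Ch L k (x::D) g -> In x D -> Ch L k D g).
  { intros x g Hx Hin. eapply Ch_weak; eauto. intros z [<-|Hz]; auto. }
  clear IH step.
  inversion Hd; subst.
  - destruct (perm_split _ _ H0) as [G HG]. eapply h_ax; eauto.
  - apply h_top.
  - destruct (classic (In a D)) as [Ha|Ha].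
    + apply h_impR2; auto. apply same; eapply drop; eauto.
    + apply h_impR1; auto.
  - destruct (classic (In b D)) as [Hb|Hb]; [exfalso; exact (skip _ H3 Hb)|].
    destruct (split_info _ _ H0) as [G [HG [Hsub Hsup]]].
    eapply h_impL with (G:=G); [exact HG|exact H1|exact notin|intro Hi; apply Hb, Hsub, Hi|apply push, H2|apply reset, H3].
  - apply h_andR; apply same; auto.
  - destruct (classic (In a D)) as [Hb|Hb]; [exfalso; exact (skip _ H2 Hb)|].
    destruct (split_info _ _ H0) as [G [HG [Hsub Hsup]]].
    eapply h_andL1 with (G:=G); [exact HG|exact H1|intro Hi; apply Hb, Hsub, Hi|apply reset, H2].
  - destruct (classic (In b D)) as [Hb|Hb]; [exfalso; exact (skip _ H2 Hb)|].
    destruct (split_info _ _ H0) as [G [HG [Hsub Hsup]]].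
    eapply h_andL2 with (G:=G); [exact HG|exact H1|intro Hi; apply Hb, Hsub, Hi|apply reset, H2].
  - apply h_orR1; apply same; auto.
  - apply h_orR2; apply same; auto.
  - destruct (classic (In a D)) as [Ha|Ha]; [exfalso; exact (skip _ H2 Ha)|].
    destruct (classic (In b D)) as [Hb|Hb]; [exfalso; exact (skip _ H3 Hb)|].
    destruct (split_info _ _ H0) as [G [HG [Hsub Hsup]]].
    eapply h_orL with (G:=G); [exact HG|exact H1|intro Hi; apply Ha, Hsub, Hi|intro Hi; apply Hb, Hsub, Hi|apply reset, H2|apply reset, H3].
  - destruct (split_info _ _ H1) as [G [HG [Hsub Hsup]]].
    assert (HaG : In a D -> In a G).
    { intro Hi. apply Hsup in Hi. destruct Hi as [Hi|Hi]; auto. exfalso; exact (neq_neg a (eq_sym Hi)). }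
    destruct (classic (In b D)) as [Hb|Hb]; destruct (classic (In a D)) as [Ha|Ha].
    + eapply h_n4 with (G:=G); [exact H0|exact HG|exact notin|apply Hsup, Hb|apply HaG, Ha|apply push, (drop _ _ H2 Hb)|apply same, (drop _ _ H3 Ha)].
    + eapply h_n3 with (G:=G); [exact H0|exact HG|exact notin|apply Hsup, Hb|intro Hi; apply Ha, Hsub, Hi|apply push, (drop _ _ H2 Hb)|apply reset, H3].
    + eapply h_n2 with (G:=G); [exact H0|exact HG|intro Hi; apply Hb, Hsup, Hi|apply HaG, Ha|apply reset, H2|apply same, (drop _ _ H3 Ha)].
    + eapply h_n1 with (G:=G); [exact H0|exact HG|intro Hi; apply Hb, Hsup, Hi|intro Hi; apply Ha, Hsub, Hi|apply reset, H2|apply reset, H3].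
  - destruct (split_info _ _ H1) as [G [HG [Hsub Hsup]]].
    eapply h_nef with (G:=G); [exact H0|exact HG|exact notin|apply push, H2].
  - destruct (split_info _ _ H1) as [G [HG [Hsub Hsup]]].
    destruct (classic (In b D)) as [Hb|Hb].
    + eapply h_copc2 with (G:=G); [exact H0|exact HG|exact notin|apply Hsup, Hb|apply push, (drop _ _ H2 Hb)].
    + eapply h_copc1 with (G:=G); [exact H0|exact HG|intro Hi; apply Hb, Hsup, Hi|apply reset, H2].
  - destruct (classic (In a D)) as [Ha|Ha]; [exfalso; exact (skip _ H1 Ha)|].
    apply h_an; auto.
Qed.

Lemma C_hist L D phi : C L D phi -> G3H L [] D phi.
Proof. intros [n Hn]. destruct (minimize (fun m => Ch L m D phi) n Hn) as [m [_ [Hc Hm]]].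
  eapply ch_hist; eauto. Qed.

Theorem theorem5p4 (L : logic) (Gamma : list form) (phi : form) :
  G3 L Gamma phi <-> G3H L [] Gamma phi.
Proof. split; intro H.
  - apply C_hist, CR_C. eapply g3_to_CR; eauto. apply incl_refl.
  - eapply hist_to_g3; eauto. intros x Hx; apply cov_in; auto.
Qed.
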